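(* Let $C$ be an $n\times n$ lower-triangular Toeplitz matrix whose diagonal entries satisfy $c_0\ge c_1\ge\cdots\ge c_{n-1}\ge0$ (entry $(i,j)$ equals $c_{i-j}$ for $i\ge j$). Let $k,b\ge1$ be integers with $(k-1)b\le n-1$. Then $$\mathrm{sens}_{k,b}(C)^2\le k\,\|C\|_{1\to2}^2+\frac{k}{b}\,\|C\|_{1\to1}^2 .$$
   Context: For an $n\times n$ matrix $C$ and integers $k,b\ge1$ with $(k-1)b\le n-1$, $\mathrm{sens}_{k,b}(C):=\bigl\|\sum_{j=0}^{k-1}C_{[\cdot,jb]}\bigr\|_2$, where $C_{[\cdot,m]}$ is the $m$-th column of $C$ with columns indexed from $0$; for $C$ as in the claim this equals $\sqrt{\sum_{i=0}^{n-1}\bigl[\sum_{j=0}^{\min(k-1,\lfloor i/b\rfloor)}c_{i-jb}\bigr]^2}$ and is the sensitivity under $b$-min-separated participation. For a matrix $M$, $\|M\|_{1\to1}$ is the maximum $\ell_1$ norm of a column of $M$ and $\|M\|_{1\to2}$ is the maximum $\ell_2$ norm of a column of $M$. *)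

(* Defs.v *)
From mathcomp Require Import all_boot all_order all_algebra.
Set Implicit Arguments. Unset Strict Implicit. Unset Printing Implicit Defensive.
Import Order.TTheory GRing.Theory Num.Theory.
Local Open Scope ring_scope.

Definition toeplitz_lt (R : pzRingType) (n : nat) (c : nat -> R) : 'M[R]_n :=
  \matrix_(i < n, j < n) (if (j <= i)%N then c (i - j)%N else 0).

Definition l2norm (R : rcfType) (n : nat) (v : 'cV[R]_n) : R :=
  Num.sqrt (\sum_(i < n) v i 0 ^+ 2).

Definition l1norm (R : rcfType) (n : nat) (v : 'cV[R]_n) : R :=
  \sum_(i < n) `|v i 0|.

Definition norm_1_2 (R : rcfType) (m n : nat) (M : 'M[R]_(m, n)) : R :=
  \big[Num.max/0]_(j < n) l2norm (col j M).

Definition norm_1_1 (R : rcfType) (m n : nat) (M : 'M[R]_(m, n)) : R :=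
  \big[Num.max/0]_(j < n) l1norm (col j M).

(* column with (nat) index m of M (columns indexed from 0); the zero column if m >= n
   (never used in that case under the hypothesis (k-1)b <= n-1). *)
Definition coln (R : pzRingType) (m n : nat) (M : 'M[R]_(m, n)) (p : nat) : 'cV[R]_m :=
  \col_i (if @insub _ (fun q => q < n)%N _ p is Some j then M i j else 0) .

Definition sens (R : rcfType) (n : nat) (k b : nat) (C : 'M[R]_n) : R :=
  l2norm (\sum_(j < k) coln C (j * b)%N).

(* Main.v *)
Require Import Defs.
From mathcomp Require Import all_boot all_order all_algebra.
From mathcomp Require Import zify ring lra.
Import Order.TTheory GRing.Theory Num.Theory.
Local Open Scope ring_scope.

Lemma shiftG {R : realDomainType} (g : nat -> R) (n m : nat) :
  (forall p, 0 <= g p) ->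
  \sum_(0 <= i < n) (if (m <= i)%N then g (i - m)%N else 0) <= \sum_(0 <= i < n) g i.
Proof.
move=> g0.
case: (leqP m n) => [hmn|hnm].
- rewrite (big_cat_nat (leq0n m) hmn) /=.
  have -> : \sum_(0 <= i < m) (if (m <= i)%N then g (i - m)%N else 0) = 0.
    rewrite big_nat_cond big1 // => i /andP[/andP[_ hi] _].
    by rewrite leqNgt hi.
  rewrite add0r.
  rewrite (eq_big_nat _ _ (F2 := fun i => g (i - m)%N)); last first.
    by move=> i /andP[hi _]; rewrite hi.
  rewrite -{1}(add0n m) big_addn.
  rewrite (eq_big_nat _ _ (F2 := g)); last by move=> i _; rewrite addnK.
  rewrite (big_cat_nat (leq0n (n - m)) (leq_subr m n)) /=.
  by rewrite lerDl sumr_ge0.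
- rewrite big_nat_cond big1 ?sumr_ge0 // => i /andP[/andP[_ hi] _].
  have : (i < m)%N by apply: ltn_trans hnm.
  by rewrite ltnNge => /negbTE ->.
Qed.

Lemma tri {R : realDomainType} (n : nat) (d : nat -> R) :
  (forall p, 0 <= d p) ->
  2 * \sum_(0 <= p < n) d p * \sum_(0 <= q < n - p.+1) d (q + p.+1)%N
  <= (\sum_(0 <= p < n) d p) ^+ 2.
Proof.
elim: n d => [|n IH] d d0; first by rewrite !big_geq // mulr0 expr2 mulr0.
rewrite !big_nat_recl //= subn1 /=.
have := IH (fun m => d m.+1) (fun m => d0 _).
set S' := \sum_(0 <= p < n) d p.+1.
have -> : \sum_(0 <= i < n) d i.+1 * \sum_(0 <= q < n.+1 - i.+2) d (q + i.+2)%N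
  = \sum_(0 <= p < n) d p.+1 * \sum_(0 <= q < n - p.+1) d (q + p.+1).+1.
  by apply: eq_bigr => i _; rewrite subSS; congr (_ * _); apply: eq_bigr => q _; rewrite addnS.
have -> : \sum_(0 <= q < n) d (q + 1)%N = S' by apply: eq_bigr => q _; rewrite addn1.
move=> h.
have : 0 <= d 0%N * d 0%N by rewrite mulr_ge0.
nra.
Qed.

Definition tt (R : pzRingType) (d : nat -> R) (b i j : nat) : R :=
  if (j * b <= i)%N then d (i - j * b)%N else 0.
Arguments tt {R}.

Lemma bsum {R : realDomainType} (d : nat -> R) (b : nat) :
  (forall x y, (x <= y)%N -> d y <= d x) ->
  forall K i, (K * b <= i)%N ->
  b%:R * \sum_(0 <= j < K) d (i - j * b)%N <= \sum_(0 <= q < K * b) d (i - q)%N.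
Proof.
move=> dm; elim=> [|K IH] i hK; first by rewrite !big_geq // mulr0.
rewrite big_nat_recr //= mulrDr.
rewrite mulSn addnC (big_cat_nat (leq0n (K * b)) (leq_addr b _)) /=.
apply: lerD; first by apply: IH; apply: leq_trans hK; rewrite mulSn leq_addl.
apply: (@le_trans _ _ (\sum_(K * b <= q < K * b + b) d (i - K * b)%N)).
  by rewrite sumr_const_nat addKn mulr_natl.
apply: ler_sum_nat => q /andP[hq1 hq]; apply: dm; lia.
Qed.

Lemma revsum {R : realDomainType} (d : nat -> R) (N i : nat) :
  (N <= i)%N ->
  \sum_(0 <= q < N) d (i - q)%N = \sum_(0 <= q < N) d (q + (i - N).+1)%N.
Proof.
move=> hN; rewrite big_nat_rev /=; apply: eq_big_nat => q /andP[_ hq].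
congr d; lia.
Qed.

Lemma cross {R : realDomainType} (d : nat -> R) (n b k : nat) :
  (forall p, 0 <= d p) ->
  (forall x y, (x <= y)%N -> d y <= d x) ->
  b%:R * (2 * \sum_(0 <= i < n) tt d b i k * \sum_(0 <= j < k) tt d b i j)
  <= (\sum_(0 <= p < n) d p) ^+ 2.
Proof.
move=> d0 dm.
apply: (le_trans _ (tri n d d0)).
rewrite mulrCA; apply: ler_wpM2l => //.
set V := fun p => \sum_(0 <= q < n - p.+1) d (q + p.+1)%N.
apply: (le_trans _ (shiftG (fun p => d p * V p) n (k * b) _)); last first.
  by move=> p; rewrite mulr_ge0 // /V sumr_ge0.
rewrite mulr_sumr; apply: ler_sum_nat => i /andP[_ hi].
rewrite /tt; case: ifP => hk; last by rewrite mul0r mulr0.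
rewrite mulrCA; apply: ler_wpM2l => //.
rewrite (eq_big_nat _ _ (F2 := fun j => d (i - j * b)%N)); last first.
  move=> j /andP[_ hj].
  by rewrite (leq_trans (leq_mul (ltnW hj) (leqnn b)) hk).
apply: le_trans (@bsum _ d b dm _ _ hk) _.
rewrite revsum // /V.
have hle : (k * b <= n - (i - k * b).+1)%N by lia.
rewrite [X in _ <= X](big_cat_nat (leq0n (k * b)) hle) /=.
by rewrite lerDl sumr_ge0.
Qed.

Lemma sqshift {R : realDomainType} (d : nat -> R) (n b k : nat) :
  \sum_(0 <= i < n) tt d b i k ^+ 2 <= \sum_(0 <= i < n) d i ^+ 2.
Proof.
apply: (le_trans _ (shiftG (fun p => d p ^+ 2) n (k * b) _)); last by move=> p; rewrite sqr_ge0.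
apply: ler_sum_nat => i _; rewrite /tt; case: ifP => // _.
by rewrite expr2 mulr0.
Qed.

Lemma core {R : realFieldType} (d : nat -> R) (n b : nat) :
  (0 < b)%N ->
  (forall p, 0 <= d p) ->
  (forall x y, (x <= y)%N -> d y <= d x) ->
  forall k,
  \sum_(0 <= i < n) (\sum_(0 <= j < k) tt d b i j) ^+ 2
  <= k%:R * \sum_(0 <= i < n) d i ^+ 2 + k%:R / b%:R * (\sum_(0 <= p < n) d p) ^+ 2.
Proof.
move=> bpos d0 dm; elim=> [|k IH].
  by rewrite big1 ?mul0r ?addr0 // => i _; rewrite big_geq // expr2 mulr0.
have -> : \sum_(0 <= i < n) (\sum_(0 <= j < k.+1) tt d b i j) ^+ 2 =
  \sum_(0 <= i < n) (\sum_(0 <= j < k) tt d b i j) ^+ 2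
  + \sum_(0 <= i < n) tt d b i k ^+ 2
  + 2 * \sum_(0 <= i < n) tt d b i k * \sum_(0 <= j < k) tt d b i j.
  rewrite mulr_sumr -!big_split /=; apply: eq_bigr => i _.
  by rewrite big_nat_recr //=; ring.
have hb : (0 : R) < b%:R by rewrite ltr0n.
have hc := cross d n b k d0 dm.
have hc' : 2 * \sum_(0 <= i < n) tt d b i k * \sum_(0 <= j < k) tt d b i j
   <= (\sum_(0 <= p < n) d p) ^+ 2 / b%:R.
  by rewrite ler_pdivlMr // mulrC.
have hs := sqshift d n b k.
have -> : (k.+1)%:R / b%:R = k%:R / b%:R + 1 / b%:R :> R.
  by rewrite -addn1 natrD mulrDl.
rewrite -addn1 natrD.
move: hc' hs IH; rewrite mul1r; lra.
Qed.

Theorem mainTheorem2 (R : rcfType) (n : nat) (c : nat -> R) (k b : nat) :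
  (0 < n)%N ->
  (forall i : nat, (i.+1 < n)%N -> c i.+1 <= c i) ->
  0 <= c n.-1 ->
  (1 <= k)%N -> (1 <= b)%N -> ((k - 1) * b <= n - 1)%N ->
  sens k b (toeplitz_lt n c) ^+ 2 <=
    k%:R * norm_1_2 (toeplitz_lt n c) ^+ 2
    + (k%:R / b%:R) * norm_1_1 (toeplitz_lt n c) ^+ 2.
Proof.
case: n => [//|n'] n0 cm cn k1 b1 _.
set n := n'.+1 in cm cn *.
have cmono : forall x y, (x <= y)%N -> (y < n)%N -> c y <= c x.
  move=> x y hxy hy; have [m hm] : exists m, y = (x + m)%N by exists (y - x)%N; lia.
  subst y; elim: m hy {hxy} => [|m IH] hy; first by rewrite addn0.
  apply: le_trans (IH _); last by lia.
  by rewrite addnS; apply: cm; lia.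
pose d := fun m => if (m < n)%N then c m else 0.
have cpos : forall m, (m < n)%N -> 0 <= c m.
  by move=> m hm; apply: le_trans cn (cmono _ _ _ _); lia.
have d0 : forall p, 0 <= d p.
  by move=> p; rewrite /d; case: ifP => // h; apply: cpos.
have dm : forall x y, (x <= y)%N -> d y <= d x.
  move=> x y hxy; rewrite /d; case: ifP => hy; case: ifP => hx.
  - exact: cmono.
  - by exfalso; move: hx; rewrite (leq_ltn_trans hxy hy).
  - exact: cpos.
  - by [].
have Hcore := core d n b b1 d0 dm k.
rewrite !big_mkord in Hcore.
set C := toeplitz_lt n c.
have Hv : forall (i : 'I_n) (j : nat), coln C (j * b) i 0 = tt d b i j.
  move=> i j; rewrite /coln mxE; case: insubP => [/= jj hjj hval | hn].
    rewrite /C /toeplitz_lt mxE hval /tt /d; case: ifP => h //.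
    have -> : (i - j * b < n)%N by have := ltn_ord i; lia.
    by [].
  rewrite /tt; case: ifP => h //; exfalso; move: hn.
  by rewrite (leq_ltn_trans h (ltn_ord i)).
have Hsens : sens k b C ^+ 2 =
   \sum_(i < n) (\sum_(j < k) tt d b i j) ^+ 2.
  rewrite /sens /l2norm sqr_sqrtr; last by apply: sumr_ge0 => i _; rewrite sqr_ge0.
  apply: eq_bigr => i _; rewrite summxE; congr (_ ^+ 2).
  by apply: eq_bigr => j _; rewrite Hv.
have Hd : forall i : 'I_n, d i = c i by move=> i; rewrite /d ltn_ord.
have Q0 : 0 <= \sum_(i < n) d i ^+ 2 by apply: sumr_ge0 => i _; rewrite sqr_ge0.
have S0 : 0 <= \sum_(i < n) d i by apply: sumr_ge0 => i _.
idtac.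
have HC0 : forall i : 'I_n'.+1, col ord0 C i 0 = d i.
  by move=> i; rewrite mxE /C /toeplitz_lt mxE leq0n subn0 Hd.
have N12 : Num.sqrt (\sum_(i < n'.+1) d i ^+ 2) <= norm_1_2 C.
  rewrite /norm_1_2 [X in _ <= X]big_ord_recl le_max; apply/orP; left.
  rewrite /l2norm; rewrite le_eqVlt; apply/orP; left; apply/eqP; congr Num.sqrt.
  by apply: eq_bigr => i _; rewrite HC0.
have N11 : \sum_(i < n'.+1) d i <= norm_1_1 C.
  rewrite /norm_1_1 [X in _ <= X]big_ord_recl le_max; apply/orP; left.
  rewrite /l1norm le_eqVlt; apply/orP; left; apply/eqP.
  by apply: eq_bigr => i _; rewrite HC0 ger0_norm.
have N12' : \sum_(i < n'.+1) d i ^+ 2 <= norm_1_2 C ^+ 2.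
  rewrite -{1}(sqr_sqrtr Q0) !expr2.
  by apply: ler_pM => //; apply: sqrtr_ge0.
have N11' : (\sum_(i < n'.+1) d i) ^+ 2 <= norm_1_1 C ^+ 2.
  by rewrite !expr2; apply: ler_pM.
rewrite Hsens.
have -> : \sum_(i < n) (\sum_(j < k) tt d b i j) ^+ 2 = \sum_(i < n) (\sum_(0 <= j < k) tt d b i j) ^+ 2.
  by apply: eq_bigr => i _; rewrite big_mkord.
apply: le_trans Hcore _.
apply: lerD; apply: ler_wpM2l => //.
by rewrite divr_ge0.
Qed.
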